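(* Let $h>0$, let $r\in\{2,4,8,16\}$, let $j\in\{1,\dots,r-1\}$ and put $\theta=j/r$. Place a hanging node at $P=(x_c,y_c)$ and consider the seven points $$A_\pm=(x_c-\theta h,\;y_c\pm h),\quad B_\pm=(x_c+(1-\theta)h,\;y_c\pm h),\quad C=(x_c-\theta h,\;y_c),\quad D=(x_c+(1-\theta)h,\;y_c),\quad P.$$ Define the seven-point scheme for $\Delta u=f$ $$\alpha_{A}\big(U_{A_+}+U_{A_-}\big)+\alpha_{B}\big(U_{B_+}+U_{B_-}\big)+\alpha_C U_C+\alpha_D U_D+\alpha_P U_P=\beta_C f_C+\beta_D f_D,$$ with $$h^2\alpha_A=\frac{2-\theta}{3},\quad h^2\alpha_B=\frac{1+\theta}{3},\quad h^2\alpha_C=\frac{2}{\theta}-\frac43+\frac{2\theta}{3},\quad h^2\alpha_D=\frac{2}{1-\theta}-\frac43+\frac{2(1-\theta)}{3},\quad h^2\alpha_P=-\frac{2}{\theta(1-\theta)},$$ $$\beta_C=\frac{2-\theta}{3},\qquad \beta_D=\frac{1+\theta}{3}$$ (all other weights of $f$, including the one at $P$, are zero). Then: (i) $\beta_C+\beta_D=1$, $\beta_C,\beta_D>0$, all of $\alpha_A,\alpha_B,\alpha_C,\alpha_D$ are positive and $\alpha_P<0$ with $\alpha_P=-(2\alpha_A+2\alpha_B+\alpha_C+\alpha_D)$; (ii) replacing $j$ by $r-j$ (i.e. $\theta$ by $1-\theta$) exchanges the roles of the left points $A_\pm,C$ and the right points $B_\pm,D$ (the coefficients appear in reverse order), and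 the coefficients depend on $j,r$ only through $j/r$; (iii) the scheme is exact for every polynomial $p(x,y)$ of total degree at most $4$ whose coefficients of $x^4$ and of $y^4$ vanish, i.e. for such $p$, $$\alpha_A\big(p(A_+)+p(A_-)\big)+\alpha_B\big(p(B_+)+p(B_-)\big)+\alpha_C p(C)+\alpha_D p(D)+\alpha_P p(P)=\beta_C\,\Delta p(C)+\beta_D\,\Delta p(D).$$
   Context: Setting: a two-grid Cartesian discretization of the Poisson equation $\Delta u=f$ with a coarse mesh of size $h$ and a fine mesh of size $h/r$. A hanging node is a fine-grid point lying on a coarse grid line strictly between two consecutive coarse grid points; here the coarse grid points are at $x=x_c-\theta h$ and $x=x_c+(1-\theta)h$ on the line $y=y_c$, and the neighboring coarse lines are $y=y_c\pm h$. $U_Q$ denotes the discrete approximation of $u(Q)$ and $f_Q=f(Q)$. *)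

(* Defs.v *)
From HB Require Import structures.
From mathcomp Require Import all_boot all_order all_algebra.
From mathcomp Require Import mpoly.
Set Implicit Arguments. Unset Strict Implicit. Unset Printing Implicit Defensive.
Import Order.TTheory GRing.Theory Num.Theory.
Local Open Scope ring_scope.

Definition vx : 'I_2 := @Ordinal 2 0 isT.
Definition vy : 'I_2 := @Ordinal 2 1 isT.

Definition pt (R : nzRingType) (x y : R) : 'I_2 -> R :=
  fun i => if val i == 0%N then x else y.

Definition laplacian (R : nzRingType) (p : {mpoly R[2]}) : {mpoly R[2]} :=
  mderiv vx (mderiv vx p) + mderiv vy (mderiv vy p).

Definition mx4 : 'X_{1..2} := (mnm1 vx *+ 4)%MM.
Definition my4 : 'X_{1..2} := (mnm1 vy *+ 4)%MM.

Section Coeffs.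
Variable R : realFieldType.
Definition theta (j r : nat) : R := j%:R / r%:R.

Definition alphaA (h : R) (j r : nat) : R := ((2 - theta j r) / 3) / h ^+ 2.
Definition alphaB (h : R) (j r : nat) : R := ((1 + theta j r) / 3) / h ^+ 2.
Definition alphaC (h : R) (j r : nat) : R :=
  (2 / theta j r - 4 / 3 + 2 * theta j r / 3) / h ^+ 2.
Definition alphaD (h : R) (j r : nat) : R :=
  (2 / (1 - theta j r) - 4 / 3 + 2 * (1 - theta j r) / 3) / h ^+ 2.
Definition alphaP (h : R) (j r : nat) : R :=
  (- (2 / (theta j r * (1 - theta j r)))) / h ^+ 2.
Definition betaC (j r : nat) : R := (2 - theta j r) / 3.
Definition betaD (j r : nat) : R := (1 + theta j r) / 3.

Definition scheme_lhs (h : R) (j r : nat) (xc yc : R) (U : R -> R -> R) : R :=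
  let t := theta j r in
  alphaA h j r * (U (xc - t * h) (yc + h) + U (xc - t * h) (yc - h))
  + alphaB h j r * (U (xc + (1 - t) * h) (yc + h) + U (xc + (1 - t) * h) (yc - h))
  + alphaC h j r * U (xc - t * h) yc
  + alphaD h j r * U (xc + (1 - t) * h) yc
  + alphaP h j r * U xc yc.

Definition scheme_rhs (h : R) (j r : nat) (xc yc : R) (f : R -> R -> R) : R :=
  let t := theta j r in
  betaC j r * f (xc - t * h) yc + betaD j r * f (xc + (1 - t) * h) yc.
End Coeffs.

(* Main.v *)
Require Import Defs.
From HB Require Import structures.
From mathcomp Require Import all_boot all_order all_algebra.
From mathcomp Require Import mpoly.
From mathcomp Require Import ring lra zify.
Import Order.TTheory GRing.Theory Num.Theory.
Local Open Scope ring_scope.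
Lemma evX (R : realFieldType) (m : 'X_{1..2}) (x y : R) :
  ('X_[m] : {mpoly R[2]}).@[pt x y] = x ^+ (m vx) * y ^+ (m vy).
Proof.
rewrite mevalX big_ord_recr big_ord_recr big_ord0 /= mul1r.
have -> : widen_ord (leqnSn 1) ord_max = vx by apply: val_inj.
by have -> : (ord_max : 'I_2) = vy by apply: val_inj.
Qed.

Lemma lapX (R : realFieldType) (m : 'X_{1..2}) (x y : R) :
  (laplacian ('X_[m] : {mpoly R[2]})).@[pt x y] =
  ((m vx)%:R * (m vx - 1)%:R * x ^+ (m vx - 2) * y ^+ (m vy)
  + (m vy)%:R * (m vy - 1)%:R * x ^+ (m vx) * y ^+ (m vy - 2)).
Proof.
rewrite /laplacian !mderivX !mderivZ !mderivX mevalD !mevalZ !evX.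
rewrite !mnmBE !mnm1E /= -!subnDA.
by rewrite !addn0 !subn0 !mulrA.
Qed.

Lemma mdeg2 (m : 'X_{1..2}) : mdeg m = (m vx + m vy)%N.
Proof.
rewrite mdegE big_ord_recr big_ord_recr big_ord0 /=.
have -> : widen_ord (leqnSn 1) ord_max = vx by apply: val_inj.
by have -> : (ord_max : 'I_2) = vy by apply: val_inj.
Qed.
Lemma mono_id (R : realFieldType) (h : R) j r xc yc (a b : nat) :
  h != 0 -> theta R j r != 0 -> 1 - theta R j r != 0 -> (a + b <= 4)%N ->
  ~~ ((a == 4) && (b == 0))%N -> ~~ ((a == 0) && (b == 4))%N ->
  scheme_lhs h j r xc yc (fun x y => x ^+ a * y ^+ b) =
  scheme_rhs h j r xc yc (fun x y => a%:R * (a - 1)%:R * x ^+ (a - 2) * y ^+ b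
     + b%:R * (b - 1)%:R * x ^+ a * y ^+ (b - 2)).
Proof.
rewrite /scheme_lhs /scheme_rhs /alphaA /alphaB /alphaC /alphaD /alphaP /betaC /betaD /=.
move: (theta R j r) => t hh ht ht1.
case: a => [|[|[|[|[|a]]]]]; case: b => [|[|[|[|[|b]]]]] //= _ _ _.
all: rewrite ?(subSS, sub0n, subn0).
all: field.
all: by rewrite hh ht ht1.
Qed.

Definition Lf (R : realFieldType) (h : R) j r xc yc (p : {mpoly R[2]}) : R :=
  scheme_lhs h j r xc yc (fun x y => p.@[pt x y])
  - scheme_rhs h j r xc yc (fun x y => (laplacian p).@[pt x y]).
Arguments Lf {R}.

Lemma Lf_add (R : realFieldType) (h : R) j r xc yc (p q : {mpoly R[2]}) :
  Lf h j r xc yc (p + q) = Lf h j r xc yc p + Lf h j r xc yc q.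
Proof.
rewrite /Lf /scheme_lhs /scheme_rhs /laplacian /= !mderivD !mevalD; ring.
Qed.

Lemma Lf_0 (R : realFieldType) (h : R) j r xc yc :
  Lf h j r xc yc 0 = 0.
Proof.
rewrite /Lf /scheme_lhs /scheme_rhs /laplacian /= !mderiv0 !meval0; ring.
Qed.

Lemma Lf_Z (R : realFieldType) (h : R) j r xc yc c (p : {mpoly R[2]}) :
  Lf h j r xc yc (c *: p) = c * Lf h j r xc yc p.
Proof.
rewrite /Lf /scheme_lhs /scheme_rhs /laplacian /= !mderivZ -scalerDr !mevalZ; ring.
Qed.

Lemma ord2 (i : 'I_2) : i = vx \/ i = vy.
Proof.
case: i => [[|[|//]] Hi]; [left|right]; exact: val_inj.
Qed.

Lemma Lf_X (R : realFieldType) (h : R) j r xc yc (m : 'X_{1..2}) :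
  h != 0 -> theta R j r != 0 -> 1 - theta R j r != 0 -> (mdeg m <= 4)%N ->
  m != mx4 -> m != my4 -> Lf h j r xc yc 'X_[m] = 0.
Proof.
move=> hh ht ht1 hd h4 h4'.
apply/eqP; rewrite subr_eq0; apply/eqP.
rewrite /scheme_lhs /scheme_rhs /= !evX !lapX.
have := @mono_id R h j r xc yc (m vx) (m vy) hh ht ht1.
rewrite /scheme_lhs /scheme_rhs /=; apply; first by rewrite -mdeg2.
- apply/negP => /andP[/eqP Ha /eqP Hb]; move/eqP: h4; apply; apply/mnmP => i.
  rewrite /mx4 mulmnE mnm1E.
  by case: (ord2 i) => ->; rewrite ?Ha ?Hb.
- apply/negP => /andP[/eqP Ha /eqP Hb]; move/eqP: h4'; apply; apply/mnmP => i.
  rewrite /my4 mulmnE mnm1E.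
  by case: (ord2 i) => ->; rewrite ?Ha ?Hb.
Qed.

Theorem mainTheorem2 (R : realFieldType) (h : R) (r j : nat) (xc yc : R) :
  0 < h -> r \in [:: 2; 4; 8; 16]%N -> (0 < j < r)%N ->
  (* (i) *)
  [/\ [/\ betaC R j r + betaD R j r = 1 :> R, 0 < betaC R j r & 0 < betaD R j r],
      [/\ 0 < alphaA h j r, 0 < alphaB h j r, 0 < alphaC h j r & 0 < alphaD h j r],
      alphaP h j r < 0 &
      alphaP h j r = - (2 * alphaA h j r + 2 * alphaB h j r + alphaC h j r + alphaD h j r)]
  (* (ii) theta -> 1 - theta swaps left and right coefficients *)
  /\ [/\ [/\ alphaA h (r - j) r = alphaB h j r & alphaB h (r - j) r = alphaA h j r],
         [/\ alphaC h (r - j) r = alphaD h j r & alphaD h (r - j) r = alphaC h j r],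
         alphaP h (r - j) r = alphaP h j r &
         [/\ betaC R (r - j) r = betaD R j r & betaD R (r - j) r = betaC R j r]]
  (* (ii) the coefficients depend on j, r only through j / r *)
  /\ (forall j' r' : nat, (j'%:R / r'%:R : R) = j%:R / r%:R ->
        [/\ [/\ alphaA h j' r' = alphaA h j r, alphaB h j' r' = alphaB h j r,
                 alphaC h j' r' = alphaC h j r & alphaD h j' r' = alphaD h j r],
            alphaP h j' r' = alphaP h j r,
            betaC R j' r' = betaC R j r & betaD R j' r' = betaD R j r])
  (* (iii) exactness on polynomials of total degree <= 4 without x^4, y^4 terms *)
  /\ (forall p : {mpoly R[2]},
        (msize p <= 5)%N -> p@_mx4 = 0 -> p@_my4 = 0 ->
        scheme_lhs h j r xc yc (fun x y => p.@[pt x y])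
        = scheme_rhs h j r xc yc (fun x y => (laplacian p).@[pt x y])).
Proof.
move=> hpos _ /andP[j0 jr].
have r0 : (0 < r)%N by apply: ltn_trans jr.
have rR : (0 : R) < r%:R by rewrite ltr0n.
have t0 : (0 : R) < theta R j r by rewrite /theta divr_gt0 // ltr0n.
have t1 : theta R j r < 1 by rewrite /theta ltr_pdivrMr // mul1r ltr_nat.
have tsw : theta R (r - j) r = 1 - theta R j r.
  rewrite /theta natrB ?(ltnW jr) // mulrBl divff //; exact: lt0r_neq0.
have hn : h != 0 by exact: lt0r_neq0.
have tn : theta R j r != 0 by exact: lt0r_neq0.
have tn1 : 1 - theta R j r != 0 by apply: lt0r_neq0; rewrite subr_gt0.
have h2 : 0 < h ^+ 2 by rewrite exprn_gt0.
have it : 1 < (theta R j r)^-1 by rewrite invf_gt1.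
have it1 : 1 < (1 - theta R j r)^-1 by rewrite invf_gt1 ?subr_gt0 // ltrBlDr ltrDl.
split; [|split; [|split]].
- rewrite /betaC /betaD /alphaA /alphaB /alphaC /alphaD /alphaP.
  move: it it1 t0 t1 tn tn1; move: (theta R j r) => t it it1 t0 t1 tn tn1.
  split; [split|split| |].
  + by field.
  + by lra.
  + by lra.
  + by apply: divr_gt0 => //; lra.
  + by apply: divr_gt0 => //; lra.
  + by apply: divr_gt0 => //; lra.
  + by apply: divr_gt0 => //; lra.
  + have P : 0 < 2 / (t * (1 - t)) / h ^+ 2.
      apply: divr_gt0 => //; apply: divr_gt0 => //.
      by apply: mulr_gt0 => //; rewrite subr_gt0.
    set X := 2 / (t * (1 - t)) in P *.
    have -> : - X / h ^+ 2 = - (X / h ^+ 2) by rewrite mulNr.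
    by rewrite oppr_lt0.
  + by field; rewrite hn tn tn1.
- rewrite /betaC /betaD /alphaA /alphaB /alphaC /alphaD /alphaP tsw.
  move: tn tn1; move: (theta R j r) => t tn tn1.
  have tn' : 1 - (1 - t) != 0 by rewrite opprB addrC subrK.
  by split; [split|split| |split]; field; rewrite ?hn ?tn ?tn1 ?tn'.
- move=> j' r' E.
  by rewrite /alphaA /alphaB /alphaC /alphaD /alphaP /betaC /betaD /theta E.
- move=> p hs h4 h4'.
  apply/eqP; rewrite -subr_eq0; apply/eqP.
  rewrite -[_ - _]/(Lf h j r xc yc p).
  rewrite (mpolyE p).
  rewrite (big_morph (Lf h j r xc yc) (@Lf_add R h j r xc yc) (@Lf_0 R h j r xc yc)).
  rewrite big_seq big1 // => m hm.
  rewrite Lf_Z Lf_X ?mulr0 //.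
  + by rewrite -ltnS; apply: leq_trans hs; apply: msize_mdeg_lt.
  + by apply/eqP => E; move: hm; rewrite mcoeff_msupp E h4 eqxx.
  + by apply/eqP => E; move: hm; rewrite mcoeff_msupp E h4' eqxx.
Qed.
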